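(* Let $R,S$ be finite nonempty sets, $k$ a positive integer, $p_r>0$ ($r\in R$), $T=\sum_{r\in R}p_r$, $d_{r,s}\ge0$, and $\kappa<0$. Let $F$ be the set of $(\mathbf x,\mathbf y)$ with $x_s,y_{r,s}\in\{0,1\}$, $\sum_{s\in S}x_s=k$, $y_{r,s}\le x_s$, and $\sum_{s\in S}y_{r,s}=1$ for all $r$. For $\mathbf y$ let $\overline{\mathcal K}(\mathbf y)=\sum_{r,s}p_ry_{r,s}e^{-\kappa d_{r,s}}$ and $\mathcal K(\mathbf y)=-\frac1\kappa\ln\left(\frac1T\overline{\mathcal K}(\mathbf y)\right)$. Let $U\subseteq S$, and suppose $c_s=c$ for all $s\in U$ with $c\ge 0$; let $\sigma(\mathbf x)=\sum_{s\in U}c_sx_s$. Let $\hat{\mathcal K}\in\mathbb R$ and let $(\mathbf x^*,\mathbf y^*,v^*,q^* )$ be optimal for \[ \text{(KPL}^p)\quad \min\ \overline{\mathcal K}(\mathbf y)+Te^{-\kappa\hat{\mathcal K}}(v-1)\ \text{ s.t. } (\mathbf x,\mathbf y)\in F,\ v\ge e^{q},\ q=-\kappa\,\sigma(\mathbf x), \] with $\sigma^*=\sigma(\mathbf x^* )$, $q^*=-\kappa\sigma^*$, $\mathcal K^*=\mathcal K(\mathbf y^* )$. Let $n=\min\{k,|U|\}$ and linearization points $\beta_i:=-\kappa c\, i$ for $i=0,1,\dots,n$, and $g(q)=\max_{0\le i\le n}\left(e^{\beta_i}+e^{\beta_i}(q-\beta_i)\right)$ (the tangent-line lower approximation of $e^q$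 used in the linearized model (KPL$^t$), in which $v\ge e^q$ is replaced by $v\ge e^{\beta_i}+e^{\beta_i}(q-\beta_i)$ for all $i$). Define $\hat\sigma$ and $\ddot\sigma$ by \[ \mathcal K^*+\hat\sigma=-\tfrac1\kappa\ln\left(\tfrac1T\left(\overline{\mathcal K}(\mathbf y^* )+Te^{-\kappa\hat{\mathcal K}}\left(e^{q^*}-1\right)\right)\right),\quad \mathcal K^*+\ddot\sigma=-\tfrac1\kappa\ln\left(\tfrac1T\left(\overline{\mathcal K}(\mathbf y^* )+Te^{-\kappa\hat{\mathcal K}}\left(g(q^* )-1\right)\right)\right). \] Then $\ddot\sigma=\hat\sigma$.
   Context: $\hat\sigma$ is the penalty applied to the optimal Kolm–Pollak score by the model with the exact exponential constraint, and $\ddot\sigma$ the penalty applied when the exponential is replaced by its lower-bounding tangent lines at the points $\beta_i$. *)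

(* Defs.v *)
From mathcomp Require Import all_boot all_order all_algebra.
From mathcomp Require Import all_classical all_reals all_analysis.
Set Implicit Arguments. Unset Strict Implicit. Unset Printing Implicit Defensive.
Import Order.TTheory GRing.Theory Num.Theory.
Local Open Scope ring_scope.

Section KP.
Variables (R : realType) (Rs Ss : finType).

Definition Ttot (p : Rs -> R) : R := \sum_(r : Rs) p r.

Definition feasF (k : nat) (x : Ss -> R) (y : Rs -> Ss -> R) : Prop :=
  [/\ (forall s, x s = 0 \/ x s = 1),
      (forall r s, y r s = 0 \/ y r s = 1),
      \sum_(s : Ss) x s = k%:R,
      (forall r s, y r s <= x s) &
      (forall r, \sum_(s : Ss) y r s = 1)].

Definition Kbar (p : Rs -> R) (kappa : R) (d : Rs -> Ss -> R)
  (y : Rs -> Ss -> R) : R :=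
  \sum_(r : Rs) \sum_(s : Ss) p r * y r s * expR (- kappa * d r s).

Definition Kscore (p : Rs -> R) (kappa : R) (d : Rs -> Ss -> R)
  (y : Rs -> Ss -> R) : R :=
  - kappa^-1 * ln ((Ttot p)^-1 * Kbar p kappa d y).

Definition sigmaU (U : {set Ss}) (cs : Ss -> R) (x : Ss -> R) : R :=
  \sum_(s in U) cs s * x s.

Definition feasKPLp (k : nat) (U : {set Ss}) (cs : Ss -> R) (kappa : R)
  (x : Ss -> R) (y : Rs -> Ss -> R) (v q : R) : Prop :=
  [/\ feasF k x y, expR q <= v & q = - kappa * sigmaU U cs x].

Definition objKPLp (p : Rs -> R) (kappa : R) (d : Rs -> Ss -> R) (Khat : R)
  (y : Rs -> Ss -> R) (v : R) : R :=
  Kbar p kappa d y + Ttot p * expR (- kappa * Khat) * (v - 1).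

Definition optKPLp (p : Rs -> R) (k : nat) (d : Rs -> Ss -> R) (kappa : R)
  (U : {set Ss}) (cs : Ss -> R) (Khat : R)
  (x : Ss -> R) (y : Rs -> Ss -> R) (v q : R) : Prop :=
  feasKPLp k U cs kappa x y v q /\
  forall x' y' v' q', feasKPLp k U cs kappa x' y' v' q' ->
    objKPLp p kappa d Khat y v <= objKPLp p kappa d Khat y' v'.

Definition beta (kappa c : R) (i : nat) : R := - kappa * c * i%:R.

(* g(q) = max_{0<=i<=n} (e^{beta_i} + e^{beta_i}(q - beta_i));
   the seed 1 + q is the i = 0 tangent line, which is itself in the max. *)
Definition gtan (kappa c : R) (n : nat) (q : R) : R :=
  \big[Num.max/(1 + q)]_(i < n.+1)
     (expR (beta kappa c i) + expR (beta kappa c i) * (q - beta kappa c i)).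

Definition sigma_hat (p : Rs -> R) (kappa : R) (d : Rs -> Ss -> R) (Khat : R)
  (y : Rs -> Ss -> R) (q : R) : R :=
  - kappa^-1 * ln ((Ttot p)^-1 *
      (Kbar p kappa d y + Ttot p * expR (- kappa * Khat) * (expR q - 1)))
  - Kscore p kappa d y.

Definition sigma_ddot (p : Rs -> R) (kappa : R) (d : Rs -> Ss -> R) (Khat : R)
  (c : R) (n : nat) (y : Rs -> Ss -> R) (q : R) : R :=
  - kappa^-1 * ln ((Ttot p)^-1 *
      (Kbar p kappa d y + Ttot p * expR (- kappa * Khat) * (gtan kappa c n q - 1)))
  - Kscore p kappa d y.

End KP.

(* Main.v *)
Require Import Defs.
From mathcomp Require Import all_boot all_order all_algebra.
From mathcomp Require Import all_classical all_reals all_analysis.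
Import Order.TTheory GRing.Theory Num.Theory.
Local Open Scope ring_scope.

Lemma tangent_le (R : realType) (a q : R) : expR a + expR a * (q - a) <= expR q.
Proof.
have -> : expR q = expR a * expR (q - a) by rewrite -expRD addrC subrK.
rewrite -{1}(mulr1 (expR a)) -mulrDr ler_wpM2l ?expR_ge0 //.
exact: expR_ge1Dx.
Qed.

Lemma gtan_exp (R : realType) (kappa c : R) (n m : nat) :
  (m <= n)%N -> gtan kappa c n (beta kappa c m) = expR (beta kappa c m).
Proof.
move=> mn; rewrite /gtan; apply: le_anti; apply/andP; split.
  apply: bigmax_le.
    by have := @tangent_le R 0 (beta kappa c m); rewrite expR0 mul1r subr0.
  by move=> i _; exact: tangent_le.
have mn1 : (m < n.+1)%N by [].
apply: le_trans (le_bigmax_cond _ _ (j := Ordinal mn1) isT) => /=.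
by rewrite subrr mulr0 addr0.
Qed.

Theorem proposition3 (R : realType) (Rs Ss : finType) (k : nat)
  (p : Rs -> R) (d : Rs -> Ss -> R) (kappa : R)
  (U : {set Ss}) (cs : Ss -> R) (c : R) (Khat : R)
  (xs : Ss -> R) (ys : Rs -> Ss -> R) (vs qs : R) :
  (0 < #|Rs|)%N -> (0 < #|Ss|)%N -> (0 < k)%N ->
  (forall r, 0 < p r) ->
  (forall r s, 0 <= d r s) ->
  kappa < 0 ->
  (forall s, s \in U -> cs s = c) -> 0 <= c ->
  optKPLp p k d kappa U cs Khat xs ys vs qs ->
  sigma_ddot p kappa d Khat c (minn k #|U|) ys qs = sigma_hat p kappa d Khat ys qs.
Proof.
move=> _ _ _ _ _ _ csc _ [[[x01 _ sumx _ _] _ ->] _].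
have xE : forall s, xs s = ((xs s == 1) : nat)%:R.
  by move=> s; case: (x01 s) => ->; rewrite ?eqxx // eq_sym oner_eq0.
set N := (\sum_(s in U) ((xs s == 1%R) : nat))%N.
have sigE : sigmaU U cs xs = c * N%:R.
  rewrite /sigmaU /N natr_sum mulr_sumr; apply: eq_bigr => s sU.
  by rewrite csc // -xE.
have NU : (N <= #|U|)%N.
  rewrite -sum1_card /N; apply: leq_sum => s _; by case: (_ == _).
have Nk : (N <= k)%N.
  have : (\sum_s ((xs s == 1%R) : nat))%N = k.
    apply/eqP; rewrite -(eqr_nat R) natr_sum -sumx; apply/eqP.
    by apply: eq_bigr => s _; rewrite -xE.
  move=> <-; rewrite (bigID (fun s => s \in U)) /=; exact: leq_addr.
have qE : - kappa * sigmaU U cs xs = beta kappa c N by rewrite sigE /beta mulrA.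
rewrite qE /sigma_ddot /sigma_hat gtan_exp //.
clearbody N. by rewrite leq_min Nk NU.
Qed.
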